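(* Let $X$ be a Banach space over $\mathbb{K}\in\{\mathbb{R},\mathbb{C}\}$ and $V\subset X$ an $n$-dimensional subspace ($n\ge1$). Let $A\in B(V)$ satisfy $\|A\|_{w,V}>0$, and let $A_0\in B(X,V)$ satisfy $A_0|_V=A$. Put $B_V(X,V)=\{L\in B(X,V): L|_V=0\}$ and $Z_A=\operatorname{span}[A_0]\oplus B_V(X,V)$. Then the numerical radius $\|\cdot\|_w$ (of operators in $Z_A$ regarded as operators $X\to X$) is a norm on $Z_A$, i.e. $\|L\|_w>0$ for every $L\in Z_A\setminus\{0\}$.
   Context: $B(X,V)$ denotes bounded linear operators $X\to V$, $B(V)=B(V,V)$. For $T\in B(X)$ the numerical radius is $\|T\|_w=\sup\{|x^*(Tx)|:x\in S_X,x^*\in S_{X^*},x^*(x)=1\}$. For $A\in B(V)$, $\|A\|_{w,V}=\sup\{|v^*(Av)|: v^*\in B_{V^*},v\in B_V,v^*(v)=1\}$ (the numerical radius computed in $V$). *)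

(* Defs.v *)
From Stdlib Require Import Reals.
Open Scope R_scope.
Set Implicit Arguments.

(* Scalars: b = false gives K = R, b = true gives K = C (modelled as R*R). *)
Definition K (b : bool) : Type := if b then (R * R)%type else R.

Definition K0 (b : bool) : K b :=
  match b return K b with true => (0, 0) | false => 0 end.
Definition K1 (b : bool) : K b :=
  match b return K b with true => (1, 0) | false => 1 end.
Definition Kadd {b : bool} : K b -> K b -> K b :=
  match b return K b -> K b -> K b with
  | true => fun x y => (fst x + fst y, snd x + snd y)
  | false => fun x y => x + y
  end.
Definition Kmul {b : bool} : K b -> K b -> K b :=
  match b return K b -> K b -> K b with
  | true => fun x y => (fst x * fst y - snd x * snd y, fst x * snd y + snd x * fst y)
  | false => fun x y => x * y
  end.
Definition Kabs {b : bool} : K b -> R :=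
  match b return K b -> R with
  | true => fun x => sqrt (fst x ^ 2 + snd x ^ 2)
  | false => fun x => Rabs x
  end.

Record banach (b : bool) := Banach {
  vT :> Type;
  vzero : vT;
  vadd : vT -> vT -> vT;
  vopp : vT -> vT;
  vscale : K b -> vT -> vT;
  vnorm : vT -> R;
  vaddA : forall x y z, vadd x (vadd y z) = vadd (vadd x y) z;
  vaddC : forall x y, vadd x y = vadd y x;
  vadd0 : forall x, vadd vzero x = x;
  vaddN : forall x, vadd (vopp x) x = vzero;
  vscaleA : forall a c x, vscale a (vscale c x) = vscale (Kmul a c) x;
  vscale1 : forall x, vscale (K1 b) x = x;
  vscaleDr : forall a x y, vscale a (vadd x y) = vadd (vscale a x) (vscale a y);
  vscaleDl : forall a c x, vscale (Kadd a c) x = vadd (vscale a x) (vscale c x);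
  vnorm_eq0 : forall x, vnorm x = 0 -> x = vzero;
  vnormZ : forall a x, vnorm (vscale a x) = Kabs a * vnorm x;
  vnormD : forall x y, vnorm (vadd x y) <= vnorm x + vnorm y;
  vcomplete : forall u : nat -> vT,
    (forall eps, 0 < eps -> exists N, forall m k, (N <= m)%nat -> (N <= k)%nat ->
        vnorm (vadd (u m) (vopp (u k))) < eps) ->
    exists l, forall eps, 0 < eps -> exists N, forall m, (N <= m)%nat ->
        vnorm (vadd (u m) (vopp l)) < eps
}.

Arguments vzero {b X} : rename.
Arguments vadd {b X} : rename.
Arguments vopp {b X} : rename.
Arguments vscale {b X} : rename.
Arguments vnorm {b X} : rename.

Section Defs.
Context {b : bool} {X : banach b}.

Definition is_subspace (V : X -> Prop) : Prop :=
  V vzero /\ (forall x y, V x -> V y -> V (vadd x y)) /\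
  (forall a x, V x -> V (vscale a x)).

Fixpoint lincomb (c : nat -> K b) (e : nat -> X) (n : nat) : X :=
  match n with
  | O => vzero
  | S m => vadd (lincomb c e m) (vscale (c m) (e m))
  end.

Definition has_dim (V : X -> Prop) (n : nat) : Prop :=
  exists e : nat -> X,
    (forall i, (i < n)%nat -> V (e i)) /\
    (forall c, lincomb c e n = vzero -> forall i, (i < n)%nat -> c i = K0 b) /\
    (forall v, V v -> exists c, v = lincomb c e n).

(* T is linear on V (V = fun _ => True gives global linearity). *)
Definition linear_on {Y : Type} (V : X -> Prop) (addY : Y -> Y -> Y)
  (scaleY : K b -> Y -> Y) (T : X -> Y) : Prop :=
  (forall x y, V x -> V y -> T (vadd x y) = addY (T x) (T y)) /\
  (forall a x, V x -> T (vscale a x) = scaleY a (T x)).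

Definition in_BXV (V : X -> Prop) (T : X -> X) : Prop :=
  linear_on (fun _ => True) vadd vscale T /\
  (exists M, forall x, vnorm (T x) <= M * vnorm x) /\
  (forall x, V (T x)).

(* B(V): bounded linear V -> V (values of A outside V are irrelevant) *)
Definition in_BV (V : X -> Prop) (A : X -> X) : Prop :=
  linear_on V vadd vscale A /\
  (exists M, forall v, V v -> vnorm (A v) <= M * vnorm v) /\
  (forall v, V v -> V (A v)).

Definition in_dual_sphere (f : X -> K b) : Prop :=
  linear_on (fun _ => True) (@Kadd b) (@Kmul b) f /\
  is_lub (fun r => exists x, vnorm x <= 1 /\ r = Kabs (f x)) 1.

Definition is_numrad (T : X -> X) (r : R) : Prop :=
  is_lub (fun s => exists x f, vnorm x = 1 /\ in_dual_sphere f /\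
                     f x = K1 b /\ s = Kabs (f (T x))) r.

(* f is in the closed unit ball B_{V*} of the dual of V (values off V irrelevant):
   linear on V and sup_{v in B_V} |f v| <= 1 *)
Definition in_dualV_ball (V : X -> Prop) (f : X -> K b) : Prop :=
  linear_on V (@Kadd b) (@Kmul b) f /\
  (forall v, V v -> vnorm v <= 1 -> Kabs (f v) <= 1).

Definition is_numradV (V : X -> Prop) (A : X -> X) (r : R) : Prop :=
  is_lub (fun s => exists v f, V v /\ vnorm v <= 1 /\ in_dualV_ball V f /\
                     f v = K1 b /\ s = Kabs (f (A v))) r.

Definition in_ZA (V : X -> Prop) (A0 L : X -> X) : Prop :=
  exists (lam : K b) (T : X -> X),
    in_BXV V T /\ (forall v, V v -> T v = vzero) /\
    (forall x, L x = vadd (vscale lam (A0 x)) (T x)).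

End Defs.

(* Main.v *)
Require Import Defs.
From Stdlib Require Import Reals Lra Classical ClassicalEpsilon FunctionalExtensionality PropExtensionality.
Open Scope R_scope.

Definition Kr (b : bool) (r : R) : K b :=
  match b return K b with true => (r, 0) | false => r end.
Definition Kre {b : bool} : K b -> R :=
  match b return K b -> R with true => fun x => fst x | false => fun x => x end.
Definition Kneg {b : bool} : K b -> K b :=
  match b return K b -> K b with true => fun x => (- fst x, - snd x) | false => fun x => - x end.

Ltac kd b := destruct b; cbn [K Kabs K0 K1 Kadd Kmul Kr Kre Kneg fst snd] in *;
  repeat match goal with p : (R * R)%type |- _ => destruct p end; cbn [fst snd] in *.

Lemma Kabs_nonneg b (k : K b) : 0 <= Kabs k.
Proof. kd b. apply sqrt_pos. apply Rabs_pos. Qed.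

Lemma Kabs_K0 b : Kabs (K0 b) = 0.
Proof. kd b. replace (0^2+0^2) with 0 by ring. apply sqrt_0. apply Rabs_R0. Qed.

Lemma Kabs_K1 b : Kabs (K1 b) = 1.
Proof. kd b. replace (1^2+0^2) with 1 by ring. apply sqrt_1. apply Rabs_R1. Qed.

Lemma Kabs_mul b (k c : K b) : Kabs (Kmul k c) = Kabs k * Kabs c.
Proof. kd b.
 - rewrite <- sqrt_mult by nra. f_equal. ring.
 - apply Rabs_mult. Qed.

Lemma Kabs_Kr b r : Kabs (Kr b r) = Rabs r.
Proof. kd b. replace (r^2+0^2) with (r*r) by ring. apply sqrt_Rsqr_abs. reflexivity. Qed.

Lemma Kabs_eq0 b (k : K b) : Kabs k = 0 -> k = K0 b.
Proof. kd b.
 - intro H. apply sqrt_eq_0 in H; [|nra]. f_equal; nra.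
 - intro H. destruct (Req_dec k 0) as [e|e]; auto. apply Rabs_no_R0 in e. lra. Qed.

Lemma Kre_le_abs b (k : K b) : Kre k <= Kabs k.
Proof. kd b.
 - destruct (Rle_dec r 0).
   + pose proof (sqrt_pos (r^2+r0^2)). lra.
   + rewrite <- (sqrt_square r) at 1 by lra. apply sqrt_le_1_alt. assert (0 <= r0^2) by (apply pow2_ge_0). replace (r^2) with (r*r) by ring. lra.
 - apply Rle_abs. Qed.

Lemma Kre_add b (k c : K b) : Kre (Kadd k c) = Kre k + Kre c.
Proof. kd b; reflexivity. Qed.
Lemma Kre_mulKr b r (k : K b) : Kre (Kmul (Kr b r) k) = r * Kre k.
Proof. kd b; ring. Qed.
Lemma Kmul_Kr b r s : Kmul (Kr b r) (Kr b s) = Kr b (r * s).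
Proof. kd b; first [ring | f_equal; ring]. Qed.
Lemma Kadd_Kr b r s : Kadd (Kr b r) (Kr b s) = Kr b (r + s).
Proof. kd b; first [ring | f_equal; ring]. Qed.
Lemma Kr1 b : Kr b 1 = K1 b.
Proof. kd b; reflexivity. Qed.
Lemma Kr0 b : Kr b 0 = K0 b.
Proof. kd b; reflexivity. Qed.
Lemma Kmul0l b (k : K b) : Kmul (K0 b) k = K0 b.
Proof. kd b; first [ring | f_equal; ring]. Qed.
Lemma Kadd0l b (k : K b) : Kadd (K0 b) k = k.
Proof. kd b; first [ring | f_equal; ring]. Qed.
Lemma Kadd0r b (k : K b) : Kadd k (K0 b) = k.
Proof. kd b; first [ring | f_equal; ring]. Qed.
Lemma KaddNr b (k : K b) : Kadd k (Kneg k) = K0 b.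
Proof. kd b; first [ring | f_equal; ring]. Qed.
Lemma Kadd_neg_eq b (k c : K b) : Kadd k (Kneg c) = K0 b -> k = c.
Proof. kd b; intro H; try injection H; intros; try f_equal; lra. Qed.
Lemma Kmul1l b (k : K b) : Kmul (K1 b) k = k.
Proof. kd b; first [ring | f_equal; ring]. Qed.
Lemma Kmul1r b (k : K b) : Kmul k (K1 b) = k.
Proof. kd b; first [ring | f_equal; ring]. Qed.
Lemma Kmul_addr b (a k c : K b) : Kmul a (Kadd k c) = Kadd (Kmul a k) (Kmul a c).
Proof. kd b; first [ring | f_equal; ring]. Qed.
Lemma Kmul_negr b (a k : K b) : Kmul a (Kneg k) = Kneg (Kmul a k).
Proof. kd b; first [ring | f_equal; ring]. Qed.

Section Vec.
Context {b : bool} {X : banach b}.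

Lemma vadd0r (x : X) : vadd x vzero = x.
Proof. rewrite vaddC. apply vadd0. Qed.
Lemma vcancel (x y z : X) : vadd x y = vadd x z -> y = z.
Proof. intro H. rewrite <- (vadd0 X y), <- (vadd0 X z), <- (vaddN X x), <- !vaddA, H. reflexivity. Qed.
Lemma vscale0 (k : K b) : vscale k (@vzero _ X) = vzero.
Proof. apply (vcancel (vscale k vzero)). rewrite <- vscaleDr, !vadd0r. reflexivity. Qed.
Lemma vscaleK0 (x : X) : vscale (K0 b) x = vzero.
Proof. apply (vcancel (vscale (K0 b) x)). rewrite <- vscaleDl, Kadd0l, vadd0r. reflexivity. Qed.
Lemma vnorm0 : vnorm (@vzero _ X) = 0.
Proof. rewrite <- (vscaleK0 vzero), vnormZ, Kabs_K0. ring. Qed.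

Definition rs (r : R) (x : X) : X := vscale (Kr b r) x.
Lemma rsA r s (x : X) : rs r (rs s x) = rs (r * s) x.
Proof. unfold rs. rewrite vscaleA, Kmul_Kr. reflexivity. Qed.
Lemma rsDl r s (x : X) : rs (r + s) x = vadd (rs r x) (rs s x).
Proof. unfold rs. rewrite <- vscaleDl, Kadd_Kr. reflexivity. Qed.
Lemma rsDr r (x y : X) : rs r (vadd x y) = vadd (rs r x) (rs r y).
Proof. apply vscaleDr. Qed.
Lemma rs1 (x : X) : rs 1 x = x.
Proof. unfold rs. rewrite Kr1. apply vscale1. Qed.
Lemma rs0 (x : X) : rs 0 x = vzero.
Proof. unfold rs. rewrite Kr0. apply vscaleK0. Qed.
Lemma rsz r : rs r (@vzero _ X) = vzero.
Proof. apply vscale0. Qed.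
Lemma vnorm_rs r (x : X) : vnorm (rs r x) = Rabs r * vnorm x.
Proof. unfold rs. rewrite vnormZ, Kabs_Kr. reflexivity. Qed.
Lemma vnorm_nonneg (x : X) : 0 <= vnorm x.
Proof. pose proof (vnormD X x (rs (-1) x)).
 replace (vadd x (rs (-1) x)) with (@vzero _ X) in H.
 - rewrite vnorm0, vnorm_rs in H. replace (Rabs (-1)) with 1 in H by (rewrite Rabs_left; lra). lra.
 - rewrite <- (rs1 x) at 1. rewrite <- rsDl. replace (1 + -1) with 0 by ring. rewrite rs0. reflexivity. Qed.

Lemma vadd4 (p q r t : X) : vadd (vadd p q) (vadd r t) = vadd (vadd p r) (vadd q t).
Proof. rewrite <- !vaddA. f_equal. rewrite !vaddA. f_equal. apply vaddC. Qed.

Inductive vexp := Vx | Vy | Vz | V0 | Vadd (e1 e2 : vexp) | Vrs (r : R) (e : vexp).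
Fixpoint veval (x y z : X) (e : vexp) : X :=
  match e with Vx => x | Vy => y | Vz => z | V0 => vzero
  | Vadd e1 e2 => vadd (veval x y z e1) (veval x y z e2)
  | Vrs r e => rs r (veval x y z e) end.
Fixpoint vcoef (e : vexp) : R * R * R :=
  match e with Vx => (1, 0, 0) | Vy => (0, 1, 0) | Vz => (0, 0, 1) | V0 => (0, 0, 0)
  | Vadd e1 e2 => let '(a, a2, c) := vcoef e1 in let '(a', b', c') := vcoef e2 in (a + a', a2 + b', c + c')
  | Vrs r e => let '(a, a2, c) := vcoef e in (r * a, r * a2, r * c) end.
Definition lc (x y z : X) (p : R * R * R) : X :=
  let '(a, a2, c) := p in vadd (rs a x) (vadd (rs a2 y) (rs c z)).
Lemma lc_add x y z a a2 c a' b' c' :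
  vadd (lc x y z (a, a2, c)) (lc x y z (a', b', c')) = lc x y z (a + a', a2 + b', c + c').
Proof. simpl. rewrite !rsDl. rewrite vadd4. rewrite (vadd4 (rs a2 y)). reflexivity. Qed.
Lemma veval_lc x y z e : veval x y z e = lc x y z (vcoef e).
Proof. induction e; simpl.
 - rewrite rs1, !rs0, !vadd0r. reflexivity.
 - rewrite rs1, !rs0, vadd0, vadd0r. reflexivity.
 - rewrite rs1, !rs0, !vadd0. reflexivity.
 - rewrite !rs0, !vadd0. reflexivity.
 - rewrite IHe1, IHe2. destruct (vcoef e1) as [[? ?] ?], (vcoef e2) as [[? ?] ?]. apply lc_add.
 - rewrite IHe. destruct (vcoef e) as [[? ?] ?]. simpl. rewrite !rsDr, !rsA. reflexivity. Qed.
Lemma lc_ext (x y z : X) a1 a2 a3 c1 c2 c3 : a1 = c1 -> a2 = c2 -> a3 = c3 ->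
  lc x y z (a1, a2, a3) = lc x y z (c1, c2, c3).
Proof. intros -> -> ->. reflexivity. Qed.
End Vec.

Ltac reify x y z t :=
  lazymatch t with
  | vadd ?a ?c => let ea := reify x y z a in let ec := reify x y z c in constr:(Vadd ea ec)
  | rs ?r ?a => let ea := reify x y z a in constr:(Vrs r ea)
  | vzero => constr:(V0)
  | x => constr:(Vx) | y => constr:(Vy) | z => constr:(Vz)
  end.
Ltac vring x y z :=
  lazymatch goal with |- ?l = ?r =>
    let el := reify x y z l in let er := reify x y z r in
    change (veval x y z el = veval x y z er);
    rewrite !veval_lc; cbn [vcoef]; apply lc_ext; ring end.

Section Test.
Context {b : bool} {X : banach b}.
Goal forall (x y x0 : X) t t', vadd (vadd x (rs (-t) x0)) (rs (-1) (vadd x (rs (-t') x0))) = rs (t' - t) x0.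
intros. vring x y x0. Qed.
End Test.
Ltac vfield x y z :=
  lazymatch goal with |- ?l = ?r =>
    let el := reify x y z l in let er := reify x y z r in
    change (veval x y z el = veval x y z er);
    rewrite !veval_lc; cbn [vcoef]; apply lc_ext; field end.

Section BW.
Variable T : Type.
Variable le : T -> T -> Prop.
Hypothesis le_refl : forall x, le x x.
Hypothesis le_trans : forall x y z, le x y -> le y z -> le x z.
Hypothesis le_anti : forall x y, le x y -> le y x -> x = y.
Variable D : T -> Prop.
Variable f : T -> T.
Hypothesis f_D : forall x, D x -> D (f x).
Hypothesis f_infl : forall x, D x -> le x (f x).
Definition chain (S : T -> Prop) := forall x y, S x -> S y -> le x y \/ le y x.
Variable sup : (T -> Prop) -> T.
Hypothesis sup_D : forall S, (forall x, S x -> D x) -> chain S -> D (sup S).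
Hypothesis sup_ub : forall S x, (forall x, S x -> D x) -> chain S -> S x -> le x (sup S).
Hypothesis sup_lub : forall S u, (forall x, S x -> D x) -> chain S -> D u ->
  (forall x, S x -> le x u) -> le (sup S) u.

Definition adm (P : T -> Prop) :=
  (forall x, P x -> P (f x)) /\ (forall S, (forall x, S x -> P x) -> chain S -> P (sup S)).
Definition M x := forall P, adm P -> P x.
Lemma adm_D : adm D.
Proof. split; auto. Qed.
Lemma M_D x : M x -> D x.
Proof. intro H. apply H, adm_D. Qed.
Lemma adm_M : adm M.
Proof. split.
 - intros x Hx P HP. apply HP, Hx, HP.
 - intros S HS Hc P HP. apply HP; auto. intros x Sx. apply HS; auto. Qed.
Definition extreme c := M c /\ forall x, M x -> le x c -> x <> c -> le (f x) c.

Lemma Mc c : extreme c -> forall x, M x -> le x c \/ le (f c) x.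
Proof. intros [Mc Ec] x Mx.
 pose (P := fun x => M x /\ (le x c \/ le (f c) x)).
 assert (HP : adm P).
 { split.
   - intros y [My Hy]. split. apply adm_M; auto.
     destruct Hy as [Hy|Hy].
     + destruct (classic (y = c)) as [->|ne]. right; apply le_refl. left; apply Ec; auto.
     + right. eapply le_trans. apply Hy. apply f_infl, M_D, My.
   - intros S HS Hch. split. apply adm_M; auto. intros; apply HS; auto.
     destruct (classic (forall y, S y -> le y c)) as [H|H].
     + left. apply sup_lub; auto. intros; apply M_D, HS; auto. apply M_D; auto.
     + apply not_all_ex_not in H as [y Hy]. apply imply_to_and in Hy as [Sy Hy].
       right. destruct (HS y Sy) as [_ [?|?]]. contradiction.
       eapply le_trans; eauto. apply sup_ub; auto. intros; apply M_D, HS; auto. }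
 apply (Mx P HP). Qed.

Lemma all_extreme x : M x -> extreme x.
Proof. intro Mx. apply Mx. split.
 - intros c Ec. split. apply adm_M, Ec. intros x0 Mx0 le0 ne0.
   destruct (Mc c Ec x0 Mx0) as [H|H].
   + destruct (classic (x0 = c)) as [->|ne]. apply le_refl.
     eapply le_trans. apply (proj2 Ec); auto. apply f_infl, M_D, Ec.
   + exfalso. apply ne0, le_anti; auto.
 - intros S HS Hch. assert (MS : M (sup S)). { apply adm_M; auto. intros; apply HS; auto. }
   split; auto. intros x0 Mx0 le0 ne0.
   assert (SD : forall y, S y -> D y) by (intros; apply M_D, HS; auto).
   destruct (classic (forall y, S y -> le (f y) x0)) as [H|H].
   + exfalso. apply ne0, le_anti; auto. apply sup_lub; auto. apply M_D; auto.
     intros y Sy. eapply le_trans. apply f_infl; auto. auto.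
   + apply not_all_ex_not in H as [y Hy]. apply imply_to_and in Hy as [Sy Hy].
     destruct (Mc y (HS y Sy) x0 Mx0) as [H|H]; [|contradiction].
     destruct (classic (x0 = y)) as [->|ne].
     * destruct (Mc y (HS y Sy) (sup S) MS) as [H1|H1]; auto.
       exfalso. apply ne0, le_anti; auto.
     * eapply le_trans. apply (proj2 (HS y Sy)); auto. apply sup_ub; auto. Qed.

Theorem bourbaki_witt : exists m, D m /\ f m = m.
Proof.
 assert (ch : chain M).
 { intros x y Mx My. destruct (Mc x (all_extreme x Mx) y My) as [H|H]; auto.
   left. eapply le_trans. apply f_infl, M_D, Mx. auto. }
 assert (MD : forall x, M x -> D x) by apply M_D.
 exists (sup M). assert (Ms : M (sup M)) by (apply adm_M; auto).
 split. apply M_D; auto.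
 apply le_anti. apply sup_ub; auto. apply (proj1 adm_M); auto. apply f_infl, M_D; auto. Qed.
End BW.

Section HBR.
Context {b : bool} {X : banach b}.
Variable W : X -> Prop.
Variable u : X -> R.
Hypothesis W0 : W vzero.
Hypothesis Wadd : forall x y, W x -> W y -> W (vadd x y).
Hypothesis Wrs : forall r x, W x -> W (rs r x).
Hypothesis uadd : forall x y, W x -> W y -> u (vadd x y) = u x + u y.
Hypothesis urs : forall r x, W x -> u (rs r x) = r * u x.
Hypothesis ubd : forall x, W x -> u x <= vnorm x.

Definition graph := X -> R -> Prop.
Definition gle (G H : graph) := forall x a, G x a -> H x a.
Definition Good (G : graph) :=
  (forall x a a', G x a -> G x a' -> a = a') /\
  (forall x a y c, G x a -> G y c -> G (vadd x y) (a + c)) /\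
  (forall r x a, G x a -> G (rs r x) (r * a)) /\
  (forall x a, G x a -> a <= vnorm x) /\
  (forall w, W w -> G w (u w)).
Definition G0 : graph := fun x a => W x /\ a = u x.

Lemma gle_anti G H : gle G H -> gle H G -> G = H.
Proof. intros h1 h2. apply functional_extensionality; intro x.
 apply functional_extensionality; intro a. apply propositional_extensionality; split; auto. Qed.

Lemma Good_G0 : Good G0.
Proof. unfold G0; repeat split.
 - intros x a a' [_ ->] [_ ->]; auto.
 - apply Wadd; tauto.
 - intros; destruct H, H0; subst; rewrite uadd; auto.
 - apply Wrs; tauto.
 - intros; destruct H; subst; rewrite urs; auto.
 - intros x a [Hx ->]; auto.
 - auto. Qed.

Lemma G0_le G : Good G -> gle G0 G.
Proof. intros HG x a [Hx ->]. apply HG, Hx. Qed.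

Definition gsup (S : graph -> Prop) : graph := fun x a => exists G, (G = G0 \/ S G) /\ G x a.

Lemma gsup_good S : (forall G, S G -> Good G) -> chain graph gle S -> Good (gsup S).
Proof. intros HS Hc.
 set (S' := fun G => G = G0 \/ S G).
 assert (HS' : forall G, S' G -> Good G). { intros G [->|H]. apply Good_G0. auto. }
 assert (Hc' : forall G H, S' G -> S' H -> gle G H \/ gle H G).
 { intros G H [->|HG] [->|HH]. left; intros ? ? ?; auto. left; apply G0_le; auto.
   right; apply G0_le; auto. auto. }
 unfold gsup. fold S'. repeat split.
 - intros x a a' [G [SG Ga]] [H [SH Ha]].
   destruct (Hc' G H SG SH) as [l|l].
   + apply (proj1 (HS' H SH) x); auto.
   + apply (proj1 (HS' G SG) x); auto.
 - intros x a y c [G [SG Ga]] [H [SH Ha]].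
   destruct (Hc' G H SG SH) as [l|l].
   + exists H; split; auto. apply (HS' H SH); auto.
   + exists G; split; auto. apply (HS' G SG); auto.
 - intros r x a [G [SG Ga]]. exists G; split; auto. apply (HS' G SG); auto.
 - intros x a [G [SG Ga]]. apply (HS' G SG) in Ga; auto.
 - intros w Hw. exists G0; split. left; auto. split; auto. Qed.

Definition fstep (G : graph) : graph :=
  epsilon (inhabits G) (fun G' => (Good G -> Good G' /\ gle G G') /\
     ((exists H, Good H /\ gle G H /\ H <> G) -> G' <> G)).

Lemma fstep_spec G : (Good G -> Good (fstep G) /\ gle G (fstep G)) /\
     ((exists H, Good H /\ gle G H /\ H <> G) -> fstep G <> G).
Proof. apply (epsilon_spec (inhabits G) (fun G' => (Good G -> Good G' /\ gle G G') /\
     ((exists H, Good H /\ gle G H /\ H <> G) -> G' <> G))).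
 destruct (classic (exists H, Good H /\ gle G H /\ H <> G)) as [[H [h1 [h2 h3]]]|nH].
 - exists H. split; auto.
 - exists G. split. intros; split; auto. intros ? ? ?; auto. intro; contradiction. Qed.

Lemma one_step m x0 : Good m -> ~ (exists a, m x0 a) -> exists H, Good H /\ gle m H /\ H <> m.
Proof. intros [Mf [Ma [Ms [Mb Mw]]]] nx0.
 assert (m0 : m vzero 0).
 { pose proof (Ms 0 vzero (u vzero) (Mw vzero W0)). rewrite rs0, Rmult_0_l in H. auto. }
 set (E := fun s => exists y a, m y a /\ s = a - vnorm (vadd y (rs (-1) x0))).
 assert (key : forall y a z az, m y a -> m z az ->
           a - vnorm (vadd y (rs (-1) x0)) <= vnorm (vadd z x0) - az).
 { intros y a z az my mz. pose proof (Mb _ _ (Ma _ _ _ _ my mz)).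
   pose proof (vnormD X (vadd y (rs (-1) x0)) (vadd z x0)).
   replace (vadd (vadd y (rs (-1) x0)) (vadd z x0)) with (vadd y z) in H0 by vring y z x0.
   lra. }
 assert (bE : bound E).
 { exists (vnorm x0). intros s [y [a [my ->]]]. pose proof (key y a vzero 0 my m0).
   rewrite vadd0 in H. lra. }
 assert (neE : exists s, E s).
 { exists (0 - vnorm (vadd vzero (rs (-1) x0))). exists vzero, 0. auto. }
 destruct (completeness E bE neE) as [c [cub club]].
 assert (P1 : forall y a, m y a -> a - vnorm (vadd y (rs (-1) x0)) <= c).
 { intros y a my. apply cub. exists y, a; auto. }
 assert (P2 : forall z az, m z az -> c <= vnorm (vadd z x0) - az).
 { intros z az mz. apply club. intros s [y [a [my ->]]]. apply key; auto. }
 set (H := fun x a => exists t, m (vadd x (rs (-t) x0)) (a - t * c)).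
 exists H. split; [|split].
 - repeat split.
   + intros x a a' [t h1] [t' h2].
     pose proof (Ma _ _ _ _ h1 (Ms (-1) _ _ h2)) as h3.
     replace (vadd (vadd x (rs (- t) x0)) (rs (-1) (vadd x (rs (- t') x0)))) with (rs (t' - t) x0) in h3
       by vring x x0 x.
     destruct (Req_dec t t') as [<-|ne].
     * specialize (Mf _ _ _ h1 h2). lra.
     * exfalso. apply nx0. eexists. apply (Ms (/ (t' - t))) in h3. rewrite rsA in h3.
       rewrite Rinv_l in h3 by lra. rewrite rs1 in h3. exact h3.
   + intros x a y a2 [t h1] [s h2]. exists (t + s).
     pose proof (Ma _ _ _ _ h1 h2) as h3.
     replace (vadd (vadd x y) (rs (- (t + s)) x0)) with
       (vadd (vadd x (rs (- t) x0)) (vadd y (rs (- s) x0))) by vring x y x0.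
     replace (a + a2 - (t + s) * c) with (a - t * c + (a2 - s * c)) by ring. auto.
   + intros r x a [t h1]. exists (r * t). pose proof (Ms r _ _ h1) as h3.
     replace (vadd (rs r x) (rs (- (r * t)) x0)) with (rs r (vadd x (rs (- t) x0))) by vring x x0 x.
     replace (r * a - r * t * c) with (r * (a - t * c)) by ring. auto.
   + intros x a [t h1]. pose proof (Mb _ _ h1) as hb.
     destruct (Rtotal_order t 0) as [tn|[t0|tp]].
     * set (s := - t). assert (sp : 0 < s) by (unfold s; lra).
       pose proof (P1 _ _ (Ms (/ s) _ _ h1)) as h2.
       replace (vadd (rs (/ s) (vadd x (rs (- t) x0))) (rs (-1) x0)) with (rs (/ s) x) in h2
         by (unfold s; vfield x x0 x; lra).
       rewrite vnorm_rs, Rabs_right in h2 by (left; apply Rinv_0_lt_compat; lra).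
       assert (hs : s * / s = 1) by (field; lra).
       assert (h4 : s * (/ s * (a - t * c) - / s * vnorm x) <= s * c)
         by (apply Rmult_le_compat_l; lra).
       replace (s * (/ s * (a - t * c) - / s * vnorm x)) with ((a - t * c) - vnorm x) in h4
         by (field; lra). unfold s in h4. lra.
     * subst t. replace (vadd x (rs (-0) x0)) with x in hb by vring x x0 x. lra.
     * pose proof (P2 _ _ (Ms (/ t) _ _ h1)) as h2.
       replace (vadd (rs (/ t) (vadd x (rs (- t) x0))) x0) with (rs (/ t) x) in h2
         by (vfield x x0 x; lra).
       rewrite vnorm_rs, Rabs_right in h2 by (left; apply Rinv_0_lt_compat; lra).
       assert (h4 : t * c <= t * (/ t * vnorm x - / t * (a - t * c)))
         by (apply Rmult_le_compat_l; lra).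
       replace (t * (/ t * vnorm x - / t * (a - t * c))) with (vnorm x - (a - t * c)) in h4
         by (field; lra). lra.
   + intros w Hw. exists 0. replace (vadd w (rs (-0) x0)) with w by vring w x0 w.
     replace (u w - 0 * c) with (u w) by ring. auto.
 - intros x a hx. exists 0. replace (vadd x (rs (-0) x0)) with x by vring x x0 x.
   replace (a - 0 * c) with a by ring. auto.
 - intro e. apply nx0. exists c. rewrite <- e. exists 1.
   replace (vadd x0 (rs (- (1)) x0)) with (@vzero _ X) by vring x0 x0 x0.
   replace (c - 1 * c) with 0 by ring. auto. Qed.

Theorem HB_real : exists U : X -> R,
  (forall x y, U (vadd x y) = U x + U y) /\ (forall r x, U (rs r x) = r * U x) /\
  (forall x, U x <= vnorm x) /\ (forall w, W w -> U w = u w).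
Proof.
 destruct (bourbaki_witt graph gle (fun G x a h => h) (fun G H K h1 h2 x a h => h2 x a (h1 x a h))
   gle_anti Good fstep (fun G h => proj1 (proj1 (fstep_spec G) h))
   (fun G h => proj2 (proj1 (fstep_spec G) h)) gsup gsup_good) as [m [Gm fm]].
 - intros S G HS Hc SG x a h. exists G; auto.
 - intros S K HS Hc GK HK x a [G [[->|SG] h]]. apply G0_le; auto. apply (HK G SG); auto.
 - assert (tot : forall x, exists a, m x a).
   { intro x0. apply NNPP. intro n. destruct (one_step m x0 Gm n) as [H [h1 [h2 h3]]].
     apply (proj2 (fstep_spec m)); eauto. }
   destruct Gm as [Mf [Ma [Ms [Mb Mw]]]].
   set (U := fun x => proj1_sig (constructive_indefinite_description _ (tot x))).
   assert (HU : forall x, m x (U x)). { intro x. unfold U. apply proj2_sig. }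
   exists U. repeat split.
   + intros x y. apply (Mf (vadd x y)); auto.
   + intros r x. apply (Mf (rs r x)); auto.
   + intro x. apply Mb, HU.
   + intros w Hw. apply (Mf w); auto. Qed.
End HBR.

Lemma scale_decomp (X : banach true) (p q : R) (x : X) :
  vscale ((p, q) : K true) x = vadd (rs p x) (rs q (vscale ((0, 1) : K true) x)).
Proof. unfold rs. rewrite vscaleA, <- vscaleDl. f_equal. cbn. f_equal; ring. Qed.

Lemma complexify b (X : banach b) (U : X -> R) :
  (forall x y, U (vadd x y) = U x + U y) -> (forall r x, U (rs r x) = r * U x) ->
  (forall x, U x <= vnorm x) ->
  exists F : X -> K b, linear_on (fun _ => True) (@Kadd b) (@Kmul b) F /\
    (forall x, Kabs (F x) <= vnorm x) /\ (forall x, Kre (F x) = U x).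
Proof. intros Uadd Urs Ub. destruct b.
 - exists (fun x => (U x, - U (vscale ((0, 1) : K true) x)) : K true).
   assert (lin : forall (k : K true) x, ((U (vscale k x), - U (vscale ((0, 1) : K true) (vscale k x))) : K true) =
        Kmul k ((U x, - U (vscale ((0, 1) : K true) x)) : K true)).
   { intros [p q] x. rewrite vscaleA. cbn [Kmul fst snd].
     rewrite (scale_decomp X p q x).
     replace (0 * p - 1 * q, 0 * q + 1 * p) with (- q, p) by (f_equal; ring).
     rewrite (scale_decomp X (-q) p x), !Uadd, !Urs. f_equal; ring. }
   split; [split|split].
   + intros x y _ _. rewrite vscaleDr, !Uadd. cbn. f_equal; ring.
   + intros a x _. apply lin.
   + intro x. set (a := U x). set (c := - U (vscale ((0, 1) : K true) x)).
     cbn [Kabs fst snd]. set (s := a ^ 2 + c ^ 2).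
     assert (s0 : 0 <= s) by (unfold s; pose proof (pow2_ge_0 a); pose proof (pow2_ge_0 c); lra).
     set (n := sqrt s). assert (hn : n * n = s) by (apply sqrt_sqrt; auto).
     pose proof (sqrt_pos s) as n0. fold n in n0.
     destruct (Req_dec n 0) as [e|ne]. rewrite e. apply vnorm_nonneg.
     set (w := (a / n, - c / n) : K true).
     pose proof (lin w x) as h. fold a c in h. cbn [Kmul fst snd w] in h.
     injection h as h1 _. pose proof (Ub (vscale w x)) as h2. rewrite h1, vnormZ in h2.
     assert (hw : Kabs w = 1).
     { cbn [Kabs fst snd w]. replace ((a / n) ^ 2 + (- c / n) ^ 2) with 1. apply sqrt_1.
       unfold s in hn. field_simplify_eq; [|auto]. rewrite <- hn. ring. }
     rewrite hw in h2. 
     replace (a / n * a - - c / n * c) with n in h2; [lra|].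
     field_simplify_eq; [|auto]. unfold s in hn. lra.
   + intro x. reflexivity.
 - exists U. split; [split|split].
   + intros x y _ _. apply Uadd.
   + intros a x _. apply (Urs a x).
   + intro x. cbn [Kabs]. apply Rabs_le. split.
     * pose proof (Ub (rs (-1) x)). rewrite Urs, vnorm_rs in H.
       replace (Rabs (-1)) with 1 in H by (rewrite Rabs_left; lra). lra.
     * apply Ub.
   + reflexivity. Qed.

Lemma re_eq b (X : banach b) (W : X -> Prop) (F g : X -> K b) :
  (forall k w, W w -> W (vscale k w)) ->
  (forall k w, W w -> F (vscale k w) = Kmul k (F w)) ->
  (forall k w, W w -> g (vscale k w) = Kmul k (g w)) ->
  (forall w, W w -> Kre (F w) = Kre (g w)) -> forall w, W w -> F w = g w.
Proof. intros HW HF Hg Hre w Hw. destruct b.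
 - pose proof (Hre _ (HW ((0, 1) : K true) w Hw)) as h. rewrite HF, Hg in h by auto.
   pose proof (Hre _ Hw) as h0. destruct (F w) as [p q], (g w) as [p' q'].
   cbn in h, h0. f_equal; lra.
 - apply Hre; auto. Qed.

Lemma HB_K b (X : banach b) (W : X -> Prop) (g : X -> K b) :
  is_subspace W -> linear_on W (@Kadd b) (@Kmul b) g ->
  (forall w, W w -> Kabs (g w) <= vnorm w) ->
  exists F, linear_on (fun _ => True) (@Kadd b) (@Kmul b) F /\
    (forall x, Kabs (F x) <= vnorm x) /\ (forall w, W w -> F w = g w).
Proof. intros [W0 [Wadd Wsc]] [gadd gsc] gb.
 destruct (HB_real W (fun x => Kre (g x)) W0 Wadd (fun r x h => Wsc _ _ h))
   as [U [Uadd [Urs [Ub UW]]]].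
 - intros x y hx hy. rewrite gadd by auto. apply Kre_add.
 - intros r x hx. unfold rs. rewrite gsc by auto. apply Kre_mulKr.
 - intros x hx. eapply Rle_trans. apply Kre_le_abs. auto.
 - destruct (complexify b X U Uadd Urs Ub) as [F [[Fadd Fsc] [Fb Fre]]].
   exists F. split; [split; auto|split; auto].
   apply re_eq with (W := W); auto. intros w hw. rewrite Fre. auto. Qed.

Section Dual.
Context {b : bool} {X : banach b}.

Lemma lin_zero (W : X -> Prop) (f : X -> K b) :
  W vzero -> linear_on W (@Kadd b) (@Kmul b) f -> f vzero = K0 b.
Proof. intros W0 [_ fs]. rewrite <- (vscaleK0 vzero), fs by auto. apply Kmul0l. Qed.

Lemma ball_bound (W : X -> Prop) (f : X -> K b) :
  W vzero -> (forall r x, W x -> W (rs r x)) -> linear_on W (@Kadd b) (@Kmul b) f ->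
  (forall z, W z -> vnorm z <= 1 -> Kabs (f z) <= 1) -> forall z, W z -> Kabs (f z) <= vnorm z.
Proof. intros W0 Wrs fl fb z Wz. pose proof (vnorm_nonneg z).
 destruct (Req_dec (vnorm z) 0) as [e|ne].
 - apply vnorm_eq0 in e. subst z. rewrite (lin_zero W f W0 fl), Kabs_K0. lra.
 - assert (n0 : 0 < vnorm z) by lra.
   pose proof (fb (rs (/ vnorm z) z) (Wrs _ _ Wz)) as h.
   rewrite vnorm_rs, Rabs_right in h by (left; apply Rinv_0_lt_compat; lra).
   unfold rs in h. rewrite (proj2 fl) in h by auto. rewrite Kabs_mul, Kabs_Kr in h.
   rewrite Rabs_right in h by (left; apply Rinv_0_lt_compat; lra).
   rewrite Rinv_l in h by lra. specialize (h (Rle_refl _)).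
   pose proof (Kabs_nonneg _ (f z)).
   assert (h2 : vnorm z * (/ vnorm z * Kabs (f z)) <= vnorm z * 1)
     by (apply Rmult_le_compat_l; lra).
   replace (vnorm z * (/ vnorm z * Kabs (f z))) with (Kabs (f z)) in h2 by (field; lra). lra. Qed.

Lemma dual_bound (f : X -> K b) : in_dual_sphere f -> forall z, Kabs (f z) <= vnorm z.
Proof. intros [fl [ub _]] z. apply (ball_bound (fun _ => True)); auto.
 intros z' _ h. apply ub. exists z'; auto. Qed.

Lemma make_dual (F : X -> K b) : linear_on (fun _ => True) (@Kadd b) (@Kmul b) F ->
  (forall x, Kabs (F x) <= vnorm x) -> (exists x0, vnorm x0 <= 1 /\ Kabs (F x0) = 1) ->
  in_dual_sphere F.
Proof. intros fl fb [x0 [h0 h1]]. split; auto. split.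
 - intros s [x [hx ->]]. eapply Rle_trans; eauto.
 - intros M hM. apply hM. exists x0; auto. Qed.

Lemma vscale_inj (y1 : X) k k' : vnorm y1 = 1 -> vscale k y1 = vscale k' y1 -> k = k'.
Proof. intros n1 e. apply Kadd_neg_eq. apply Kabs_eq0.
 assert (h : vscale (Kadd k (Kneg k')) y1 = vzero).
 { rewrite vscaleDl, e, <- vscaleDl, KaddNr. apply vscaleK0. }
 pose proof (vnormZ X (Kadd k (Kneg k')) y1). rewrite h, vnorm0, n1 in H. lra. Qed.

Lemma state_exists (y1 : X) : vnorm y1 = 1 -> exists F, in_dual_sphere F /\ F y1 = K1 b.
Proof. intro n1.
 set (W := fun z : X => exists k, z = vscale k y1).
 set (g := fun z : X => epsilon (inhabits (K0 b)) (fun k => z = vscale k y1)).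
 assert (gv : forall k, g (vscale k y1) = k).
 { intro k. apply (vscale_inj y1); auto. symmetry.
   apply (epsilon_spec (inhabits (K0 b)) (fun k0 => vscale k y1 = vscale k0 y1)). eauto. }
 assert (WS : is_subspace W).
 { split; [|split].
   - exists (K0 b). symmetry. apply vscaleK0.
   - intros x y [k ->] [k' ->]. exists (Kadd k k'). symmetry. apply vscaleDl.
   - intros a x [k ->]. exists (Kmul a k). apply vscaleA. }
 destruct (HB_K b X W g WS) as [F [Fl [Fb FW]]].
 - split.
   + intros x y [k ->] [k' ->]. rewrite <- vscaleDl, !gv. reflexivity.
   + intros a x [k ->]. rewrite vscaleA, !gv. reflexivity.
 - intros w [k ->]. rewrite gv, vnormZ, n1. lra.
 - assert (Fy : F y1 = K1 b).
   { rewrite FW. rewrite <- (vscale1 X y1) at 1. apply gv. exists (K1 b). symmetry; apply vscale1. }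
   exists F. split; auto. apply make_dual; auto. exists y1. rewrite Fy, Kabs_K1. lra. Qed.
End Dual.

Theorem lemma3p1 (b : bool) (X : banach b) (V : X -> Prop) (n : nat)
  (Hn : (1 <= n)%nat) (HV : is_subspace V) (Hdim : has_dim V n)
  (A : X -> X) (HA : in_BV V A) (HAw : exists r, is_numradV V A r /\ 0 < r)
  (A0 : X -> X) (HA0 : in_BXV V A0) (HA0A : forall v, V v -> A0 v = A v) :
  forall L : X -> X, in_ZA V A0 L -> (exists x, L x <> vzero) ->
    exists r, is_numrad L r /\ 0 < r.
Proof.
 intros L [lam [T [HT [HTV HL]]]] [x Hx].
 destruct HA0 as [[A0add A0sc] [[M0 HM0] A0V]].
 destruct HT as [[Tadd Tsc] [[MT HMT] TV]].
 destruct HV as [V0 [Vadd Vsc]].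
 assert (Lb : forall y, vnorm (L y) <= (Kabs lam * M0 + MT) * vnorm y).
 { intro y. rewrite HL. eapply Rle_trans. apply vnormD. rewrite vnormZ.
   pose proof (Kabs_nonneg _ lam). pose proof (HM0 y). pose proof (HMT y).
   assert (Kabs lam * vnorm (A0 y) <= Kabs lam * (M0 * vnorm y)) by (apply Rmult_le_compat_l; auto).
   nra. }
 assert (suff : exists y F, vnorm y = 1 /\ in_dual_sphere F /\ F y = K1 b /\ 0 < Kabs (F (L y))).
 2:{ destruct suff as [y [F [h1 [h2 [h3 h4]]]]].
   set (S := fun s => exists x f, vnorm x = 1 /\ in_dual_sphere f /\ f x = K1 b /\ s = Kabs (f (L x))).
   destruct (completeness S) as [r [rub rlub]].
   - exists (Kabs lam * M0 + MT). intros s [x' [f [e1 [e2 [_ ->]]]]].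
     eapply Rle_trans. apply dual_bound; auto. rewrite <- (Rmult_1_r (_ + _)), <- e1. apply Lb.
   - exists (Kabs (F (L y))). exists y, F. auto.
   - exists r. split. exact (conj rub rlub).
     eapply Rlt_le_trans. apply h4. apply rub. exists y, F. auto. }
 destruct (classic (lam = K0 b)) as [l0|l0].
 -
   assert (LT : forall z, L z = T z). { intro z. rewrite HL, l0, vscaleK0. apply vadd0. }
   set (w := T x). assert (wn : w <> vzero) by (unfold w; rewrite <- LT; auto).
   assert (nw : 0 < vnorm w).
   { pose proof (vnorm_nonneg w). destruct (Req_dec (vnorm w) 0) as [e|e].
     apply vnorm_eq0 in e. contradiction. lra. }
   assert (Tw : T w = vzero) by (apply HTV, TV).
   set (s := (2 * vnorm x + 1) / vnorm w).
   assert (sp : 0 < s) by (unfold s; pose proof (vnorm_nonneg x); apply Rdiv_lt_0_compat; lra).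
   set (y := vadd x (rs s w)).
   assert (Ty : T y = w).
   { unfold y. rewrite Tadd by auto. unfold rs. rewrite Tsc, Tw, vscale0 by auto. apply vadd0r. }
   assert (ny : vnorm x + 1 <= vnorm y).
   { pose proof (vnormD X y (rs (-1) x)).
     replace (vadd y (rs (-1) x)) with (rs s w) in H by (unfold y; vring x w x).
     rewrite !vnorm_rs in H. replace (Rabs (-1)) with 1 in H by (rewrite Rabs_left; lra).
     rewrite Rabs_right in H by lra.
     replace (s * vnorm w) with (2 * vnorm x + 1) in H by (unfold s; field; lra). lra. }
   pose proof (vnorm_nonneg x).
   set (y1 := rs (/ vnorm y) y).
   assert (n1 : vnorm y1 = 1).
   { unfold y1. rewrite vnorm_rs, Rabs_right by (left; apply Rinv_0_lt_compat; lra). field. lra. }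
   destruct (state_exists y1 n1) as [F [FD Fy1]].
   assert (Fl := proj1 FD). destruct Fl as [Fadd Fsc].
   assert (Fw : F w <> K0 b).
   { intro e.
     assert (e1 : F y = Kr b (vnorm y)).
     { assert (ey : rs (vnorm y) y1 = y) by (unfold y1; vfield y y y; lra).
       rewrite <- ey at 1. unfold rs. rewrite Fsc, Fy1 by auto. apply Kmul1r. }
     unfold y in e1 at 1. rewrite Fadd in e1 by auto. unfold rs in e1. rewrite Fsc, e in e1 by auto.
     replace (Kmul (Kr b s) (K0 b)) with (K0 b) in e1 by (destruct b; cbn; first [ring | f_equal; ring]).
     rewrite Kadd0r in e1. pose proof (dual_bound F FD x). rewrite e1, Kabs_Kr, Rabs_right in H0 by lra.
     lra. }
   exists y1, F. split; [|split; [|split]]; auto.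
   rewrite LT. unfold y1, rs. rewrite Tsc, Ty, Fsc by auto. rewrite Kabs_mul, Kabs_Kr.
   rewrite Rabs_right by (left; apply Rinv_0_lt_compat; lra).
   apply Rmult_lt_0_compat. apply Rinv_0_lt_compat; lra.
   pose proof (Kabs_nonneg _ (F w)). destruct (Req_dec (Kabs (F w)) 0) as [e|e].
   apply Kabs_eq0 in e. contradiction. lra.
 -
   destruct HAw as [r [[rub rlub] rp]].
   assert (ex : exists s, (exists v f, V v /\ vnorm v <= 1 /\ in_dualV_ball V f /\
                     f v = K1 b /\ s = Kabs (f (A v))) /\ 0 < s).
   { apply NNPP. intro nex. assert (r <= 0); [|lra]. apply rlub. intros s hs.
     apply Rnot_lt_le. intro. apply nex. eauto. }
   destruct ex as [s [[v [g [Vv [nv [[gl gb] [gv ->]]]]]] sp]].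
   assert (gbd : forall z, V z -> Kabs (g z) <= vnorm z).
   { apply ball_bound; auto. intros r0 x0 hx0. apply Vsc; auto. }
   destruct (HB_K b X V g (conj V0 (conj Vadd Vsc)) gl gbd) as [F [[Fadd Fsc] [Fb FV]]].
   assert (v1 : vnorm v = 1).
   { pose proof (gbd v Vv). rewrite gv, Kabs_K1 in H. lra. }
   exists v, F. split; [|split; [|split]]; auto.
   + apply make_dual; auto. split; auto. exists v. rewrite FV, gv, Kabs_K1 by auto. lra.
   + rewrite FV; auto.
   + rewrite HL, HA0A, HTV, vadd0r, Fsc, Kabs_mul, FV by (auto; destruct HA as [_ [_ HAV]]; auto).
     apply Rmult_lt_0_compat; auto.
     pose proof (Kabs_nonneg _ lam). destruct (Req_dec (Kabs lam) 0) as [e|e].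
     apply Kabs_eq0 in e. contradiction. lra.
Qed.
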